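(* Let $n,m,\ell$ be integers with $n-1\ge m\ge \ell\ge 0$. Then $$\sum_{j=0}^{n-m-2}\binom{n-m+\ell-3-2j}{\ell-1-j}\,\mathcal Y_n\big(2^{\{m-\ell+1+j\}},1^{\{n-m+\ell-3-2j\}}\big)=\frac{1}{n(m+1)}\binom{n-1}{m}\left(\binom{n}{\ell}-\binom{m+1}{\ell}\right).$$ In particular (case $\ell=1$), $\mathcal Y_n(2^{\{m\}},1^{\{n-m-2\}})=\frac{n-m-1}{n(m+1)}\binom{n-1}{m}$.
   Context: Let $\zeta_n=e^{2\pi\sqrt{-1}/n}$. For integers $s_1,\dots,s_m$, define $\mathfrak Z_n(s_1,\dots,s_m):=\sum_{1\le i_1<\cdots<i_m\le n-1}\prod_{k=1}^{m}(1-\zeta_n^{i_k})^{-s_k}$ (equal to $1$ if $m=0$ and to $0$ if $m>n-1$). Define $\mathcal Y_n(s_1,\dots,s_m):=\sum_{\sigma}\mathfrak Z_n(\sigma)$, where $\sigma$ runs over all distinct sequences obtained by rearranging $(s_1,\dots,s_m)$ (each distinct rearrangement counted once); $\mathcal Y_n$ of the empty sequence is $1$. Notation: $a^{\{k\}}$ denotes the block $a,a,\dots,a$ of length $k$; any term $\mathcal Y_n(\dots)$ in which some block has negative length is interpreted as $0$. Binomial coefficients $\binom{a}{b}$ are $0$ when $b<0$ or $b>a\ge0$. *)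

(* Defs.v *)
From mathcomp Require Import all_boot all_order all_algebra.
From mathcomp Require Import complex.
From mathcomp Require Import reals trigo.
Set Implicit Arguments. Unset Strict Implicit. Unset Printing Implicit Defensive.
Import GRing.Theory Num.Theory.
Local Open Scope ring_scope.
Local Open Scope complex_scope.

Definition zeta (R : realType) (n : nat) : R[i] :=
  (cos (2 * pi / n%:R))%:C + 'i * (sin (2 * pi / n%:R))%:C.

(* Zrec n s lo = sum over lo <= i_1 < ... < i_m <= n-1 of
   prod_k (1 - zeta^{i_k})^{-s_k}, where s = (s_1,...,s_m). *)
Fixpoint Zrec (R : realType) (n : nat) (s : seq int) (lo : nat) : R[i] :=
  match s with
  | [::] => 1
  | k :: s' => \sum_(lo <= j < n) (1 - zeta R n ^+ j) ^ (- k) * Zrec R n s' j.+1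
  end.

Definition Zn (R : realType) (n : nat) (s : seq int) : R[i] := Zrec R n s 1.

(* cal Y_n(s) : sum over distinct rearrangements of s
   ([permutations s] is the duplicate-free list of all permutations of s). *)
Definition Yn (R : realType) (n : nat) (s : seq int) : R[i] :=
  \sum_(t <- permutations s) Zn R n t.

Definition Y21 (R : realType) (n : nat) (a b : int) : R[i] :=
  if (0 <= a) && (0 <= b) then Yn R n (nseq `|a|%N 2%:Z ++ nseq `|b|%N 1%:Z)
  else 0.

(* binomial (a choose b) for integers a, b, as an element of R[i]:
   0 when b < 0 or b > a >= 0.  (Only used with a >= 0 below.) *)
Definition binZ (R : realType) (a b : int) : R[i] :=
  if (0 <= a) && (0 <= b) then ('C(`|a|%N, `|b|%N))%:R else 0.

(* Main.v *)
Require Import Defs.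
From mathcomp Require Import all_boot all_order all_algebra.
From mathcomp Require Import complex.
From mathcomp Require Import reals trigo.
From mathcomp Require Import zify ring lra.
Import GRing.Theory Num.Theory.
Local Open Scope ring_scope.
Module PA.
Set Implicit Arguments. Unset Strict Implicit. Unset Printing Implicit Defensive.
Import GRing.Theory Num.Theory.
Local Open Scope ring_scope.

Section Comb.
Variable T : comNzRingType.

Fixpoint el (k : nat) (xs : seq T) : T :=
  match xs with
  | [::] => (k == 0)%:R
  | x :: xs' => (if k is k'.+1 then x * el k' xs' else 0) + el k xs'
  end.

Fixpoint EE (a b : nat) (xs : seq T) : T :=
  match xs with
  | [::] => ((a == 0) && (b == 0))%:R
  | x :: xs' => EE a b xs' + (if a is a'.+1 then x ^+ 2 * EE a' b xs' else 0)
                + (if b is b'.+1 then x * EE a b' xs' else 0)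
  end.

Definition Bw (K L a : nat) xs :=
  if (a <= K)%N && (a <= L)%N then
    ('C((K - a) + (L - a), K - a))%:R * EE a ((K - a) + (L - a)) xs else 0.

Lemma Bw0 K L a xs : ~~ ((a <= K)%N && (a <= L)%N) -> Bw K L a xs = 0.
Proof. by rewrite /Bw => /negbTE ->. Qed.

Lemma Bw_eq a i j xs : Bw (a + i) (a + j) a xs = ('C(i + j, i))%:R * EE a (i + j) xs.
Proof. by rewrite /Bw !leq_addr /= !addKn. Qed.

Lemma Bw_cons K L a x xs :
  Bw K L a (x :: xs) = Bw K L a xs +
    x ^+ 2 * (if a is a'.+1 then (if K is K'.+1 then (if L is L'.+1 then Bw K' L' a' xs else 0) else 0) else 0)
  + x * ((if K is K'.+1 then Bw K' L a xs else 0) + (if L is L'.+1 then Bw K L' a xs else 0)).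
Proof.
have [hc|hc] := boolP ((a <= K)%N && (a <= L)%N); last first.
  rewrite !Bw0 //.
  have Z1 : (if a is a'.+1 then (if K is K'.+1 then (if L is L'.+1 then Bw K' L' a' xs else 0) else 0) else 0) = 0.
    by case: a hc => // a; case: K => // K; case: L => // L hc; rewrite Bw0.
  have Z2 : (if K is K'.+1 then Bw K' L a xs else 0) = 0.
    case: K hc {Z1} => // K hc; rewrite Bw0 //; apply: contra hc => /andP[h1 h2].
    by rewrite h2 (leq_trans h1) ?andbT.
  have Z3 : (if L is L'.+1 then Bw K L' a xs else 0) = 0.
    case: L hc {Z1 Z2} => // L hc; rewrite Bw0 //; apply: contra hc => /andP[h1 h2].
    by rewrite h1 (leq_trans h2).
  by rewrite Z1 Z2 Z3 !(mulr0, addr0).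
case/andP: hc => /subnKC <- /subnKC <-.
move: (K - a)%N (L - a)%N => i j.
have H2 : (if a is a'.+1 then (if (a + i)%N is K'.+1 then (if (a + j)%N is L'.+1 then Bw K' L' a' xs else 0) else 0) else 0)
    = if a is a'.+1 then ('C(i + j, i))%:R * EE a' (i + j) xs else 0.
  by case: a => //= a; rewrite Bw_eq.
have H3 : (if (a + i)%N is K'.+1 then Bw K' (a + j)%N a xs else 0)
    = if i is i'.+1 then ('C(i' + j, i'))%:R * EE a (i' + j) xs else 0.
  case: i {H2} => [|i]; last by rewrite addnS /= Bw_eq.
  by rewrite addn0; case: a => // a; rewrite Bw0 // addSn ltnn.
have H4 : (if (a + j)%N is L'.+1 then Bw (a + i)%N L' a xs else 0)
    = if j is j'.+1 then ('C(i + j', i))%:R * EE a (i + j') xs else 0.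
  case: j {H2 H3} => [|j]; last by rewrite addnS /= Bw_eq.
  by rewrite addn0; case: a => // a; rewrite Bw0 // addSn ltnn andbF.
rewrite H2 H3 H4 !Bw_eq /=.
case: i {H2 H3 H4} => [|i]; case: j => [|j].
- by rewrite /= !(mulr0, addr0); case: a => [|a]; rewrite ?(mulr0, addr0) // mulrDr; ring.
- rewrite !add0n !bin0; case: a => [|a] /=; ring.
- rewrite !addn0 binS bin_small // /=; case: a => [|a] /=; ring.
- rewrite !addSn binS natrD /= -addSn -addnS; case: a => [|a] /=; ring.
Qed.

Lemma EE_nil_S a b : EE a.+1 b [::] = 0.
Proof. by []. Qed.

Lemma el_mul xs : forall N K L, (K < N)%N ->
  el K xs * el L xs = \sum_(0 <= a < N) Bw K L a xs.
Proof.
elim: xs => [|x xs IH] N K L.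
  case: N => // N _; rewrite big_nat_recl // big1_seq ?addr0; last first.
    by move=> i _; rewrite /Bw /= mulr0; case: ifP.
  rewrite /Bw /= !subn0; case: K => [|K]; case: L => [|L] //=; rewrite ?mulr0 ?mul0r //.
move=> hK.
rewrite (eq_bigr _ (fun a _ => Bw_cons K L a x xs)) !big_split /= -!big_distrr /=.
have Z0 (M : nat) : \sum_(0 <= i < M) (0:T) = 0 by rewrite big1.
have Z1 (M : nat) : \sum_(0 <= i < M) (match i with 0%N | _ => (0:T) end) = 0.
  by rewrite big1 // => -[|i].
case: K hK => [|K] hK; case: L => [|L]; rewrite ?Z1 ?mulr0 ?addr0.
- by rewrite /= add0r Z0 -IH // !mulr0 !addr0.
- rewrite big_split /= Z0 add0r -!IH //=. ring.
- rewrite big_split /= Z0 addr0 -!IH //=; last by apply: ltnW. ring.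
- case: N hK => // N hK.
  rewrite big_split /= [X in x ^+ 2 * X]big_nat_recl //= add0r -!IH //; last by apply: ltnW.
  ring.
Qed.

Lemma el_big xs k : (size xs < k)%N -> el k xs = 0.
Proof.
elim: xs k => [|x xs IH] [|k] //= h.
by rewrite !IH ?mulr0 ?addr0 // ltnW.
Qed.

Lemma el_full xs : el (size xs) xs = \prod_(x <- xs) x.
Proof.
elim: xs => [|x xs IH]; first by rewrite big_nil.
by rewrite /= IH el_big // addr0 big_cons.
Qed.

Lemma EE_big xs a b : (size xs < a + b)%N -> EE a b xs = 0.
Proof.
elim: xs a b => [|x xs IH] a b /=.
  by case: a => [|a] //; case: b.
move=> h; rewrite IH; last by apply: ltn_trans h.
case: a h => [|a] h; case: b h => [|b] h; rewrite ?IH ?mulr0 ?addr0 //.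
by lia.
Qed.

Lemma EE00 xs : EE 0 0 xs = 1.
Proof. by elim: xs => [|x xs IH] //=; rewrite IH !addr0. Qed.

Lemma EE_full xs a : (a <= size xs)%N ->
  EE a (size xs - a) xs = (\prod_(x <- xs) x) * el a xs.
Proof.
elim: xs a => [|x xs IH] a /=.
  by rewrite leqn0 => /eqP ->; rewrite big_nil mul1r.
move=> ha; rewrite big_cons EE_big; last first.
  by rewrite subnKC // ltnS; apply: ltnW.
rewrite add0r.
case: a ha => [|a] ha.
  have := IH 0 (leq0n _); rewrite !subn0 /= => ->; ring.
rewrite !subSS IH; last by [].
rewrite ltnS in ha; case: (ltngtP a (size xs)) => h.
- rewrite -(subnSK h) /= IH //; ring.
- by rewrite leqNgt h in ha.
- rewrite h subnn /= (el_big (k := (size xs).+1)) //; ring.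
Qed.
End Comb.

End PA.
Import PA.
Module PB.
Set Implicit Arguments. Unset Strict Implicit. Unset Printing Implicit Defensive.
Import GRing.Theory Num.Theory.
Local Open Scope ring_scope.

Section PartB.
Variable R : realType.
Variable n : nat.
Local Notation C := R[i].
Local Notation z := (zeta R n).

Definition xj (j : nat) : C := (1 - z ^+ j)^-1.
Definition xsfrom (lo : nat) : seq C := [seq xj j | j <- iota lo (n - lo)].
Definition sab (a b : nat) : seq int := nseq a 2%:Z ++ nseq b 1%:Z.
Definition Wv a b lo : C := \sum_(t <- permutations (sab a b)) Zrec R n t lo.

Lemma perm_sum (s : seq int) (F : seq int -> C) : (0 < size s)%N ->
  \sum_(t <- permutations s) F t =
  \sum_(h <- undup s) \sum_(t <- permutations (rem h s)) F (h :: t).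
Proof.
by move=> hs; rewrite (perm_big _ (permutationsE hs)) big_allpairs_dep.
Qed.

Lemma mem_sab a b h : (h \in sab a b) = ((0 < a)%N && (h == 2%:Z)) || ((0 < b)%N && (h == 1%:Z)).
Proof. by rewrite mem_cat !mem_nseq. Qed.

Lemma sum_undup_sab a b (G : int -> C) :
  \sum_(h <- undup (sab a b)) G h =
  (if (0 < a)%N then G 2%:Z else 0) + (if (0 < b)%N then G 1%:Z else 0).
Proof.
have P : perm_eq (undup (sab a b)) [seq h <- [:: 2%:Z; 1%:Z] | h \in sab a b].
  apply: uniq_perm; first exact: undup_uniq.
    by rewrite filter_uniq.
  move=> h; rewrite mem_undup mem_filter mem_sab !inE.
  by case: (h == 2%:Z); case: (h == 1%:Z); rewrite ?andbT ?andbF ?orbF ?orbT.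
rewrite (perm_big _ P) big_filter !big_cons big_nil !mem_sab /= addr0.
by case: a {P} => [|a]; case: b => [|b]; rewrite /= ?add0r ?addr0.
Qed.

Lemma rem2_sab a b : rem 2%:Z (sab a.+1 b) = sab a b.
Proof. by rewrite /sab /= ?eqxx. Qed.

Lemma rem1_sab a b : rem 1%:Z (sab a b.+1) = sab a b.
Proof. by elim: a => [|a IH]; rewrite /sab /= ?eqxx //; rewrite /sab in IH; rewrite IH. Qed.

Lemma Zrec_cons k t lo : Zrec R n (k :: t) lo =
  \sum_(lo <= j < n) (1 - z ^+ j) ^ (- k) * Zrec R n t j.+1.
Proof. by []. Qed.

Lemma W_rec a b lo : (0 < a + b)%N ->
  Wv a b lo = (if (0 < a)%N then \sum_(lo <= j < n) xj j ^+ 2 * Wv a.-1 b j.+1 else 0)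
            + (if (0 < b)%N then \sum_(lo <= j < n) xj j * Wv a b.-1 j.+1 else 0).
Proof.
move=> hab; rewrite /Wv perm_sum; last by rewrite size_cat !size_nseq.
rewrite sum_undup_sab.
have H (h : int) s : \sum_(t <- permutations s) Zrec R n (h :: t) lo =
   \sum_(lo <= j < n) (1 - z ^+ j) ^ (- h) * \sum_(t <- permutations s) Zrec R n t j.+1.
  under eq_bigr => t _ do rewrite Zrec_cons.
  rewrite exchange_big /=; apply: eq_bigr => j _; by rewrite big_distrr.
congr (_ + _).
  case: a {hab} => [|a] //; rewrite rem2_sab H /=; apply: eq_bigr => j _.
  by rewrite /xj exprVn.
case: b {hab} => [|b] //; rewrite rem1_sab H /=; apply: eq_bigr => j _.
by rewrite /xj.
Qed.


Lemma xsfrom_S lo : (lo < n)%N -> xsfrom lo = xj lo :: xsfrom lo.+1.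
Proof. by move=> h; rewrite /xsfrom -(subnSK h). Qed.

Lemma xsfrom_n : xsfrom n = [::].
Proof. by rewrite /xsfrom subnn. Qed.

Lemma EE_unroll a b : (0 < a + b)%N -> forall k lo, (n - lo)%N = k -> (lo <= n)%N ->
  EE a b (xsfrom lo) = \sum_(lo <= j < n)
    ((if a is a'.+1 then xj j ^+ 2 * EE a' b (xsfrom j.+1) else 0)
   + (if b is b'.+1 then xj j * EE a b' (xsfrom j.+1) else 0)).
Proof.
move=> hab k; elim: k => [|k IH] lo hk hlo.
  have -> : lo = n by lia.
  rewrite xsfrom_n big_geq //=.
  by case: a hab => [|a]; case: b => [|b].
have hlt : (lo < n)%N by lia.
rewrite xsfrom_S // big_ltn //= (IH lo.+1) //; last by lia.
by rewrite -addrA addrC.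
Qed.

Lemma Wv00 lo : Wv 0 0 lo = 1.
Proof. by rewrite /Wv /= big_seq1. Qed.

Lemma WE : forall k a b lo, (a + b)%N = k -> (lo <= n)%N -> Wv a b lo = EE a b (xsfrom lo).
Proof.
elim=> [|k IH] a b lo hk hlo.
  have [-> ->] : a = 0%N /\ b = 0%N by lia.
  by rewrite Wv00 EE00.
rewrite W_rec ?hk // (EE_unroll _ (erefl (n - lo)%N) hlo) ?hk // big_split /=.
congr (_ + _).
  case: a hk => [|a] hk /=; first by rewrite big1.
  apply: eq_big_nat => j /andP[_ hj]; rewrite IH //; lia.
case: b hk => [|b] hk /=; first by rewrite big1.
apply: eq_big_nat => j /andP[_ hj]; rewrite IH //; lia.
Qed.

Lemma Y21E a b : (0 < n)%N -> Y21 R n a%:Z b%:Z = EE a b (xsfrom 1).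
Proof.
by move=> hn; rewrite /Y21 /= -(WE (erefl (a + b)%N)).
Qed.
End PartB.

End PB.
Import PB.
Module PC.
Set Implicit Arguments. Unset Strict Implicit. Unset Printing Implicit Defensive.
Import Order.TTheory GRing.Theory Num.Theory.
Local Open Scope ring_scope.
Local Open Scope complex_scope.

Section PolyF.
Variable F : fieldType.

Lemma coef_prod_XaddC (cs : seq F) k : all (fun c => c != 0) cs ->
  (\prod_(c <- cs) ('X + c%:P))`_k = (\prod_(c <- cs) c) * el k [seq c^-1 | c <- cs].
Proof.
elim: cs k => [|c cs IH] k /=.
  by rewrite !big_nil coef1 mul1r.
case/andP=> hc hcs; rewrite !big_cons mulrDl coefD coefXM coefCM.
case: k => [|k] /=; rewrite !IH //.
  by rewrite add0r; ring.
by field.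
Qed.

Lemma coef_XaddC_exp (k m : nat) : (('X + 1 : {poly F}) ^+ m)`_k = ('C(m, k))%:R.
Proof.
elim: m k => [|m IH] k.
  by rewrite expr0 coef1 bin0n.
rewrite exprSr mulrDr mulr1 coefD coefMX; case: k => [|k] /=.
  by rewrite add0r IH !bin0.
by rewrite !IH binS natrD addrC.
Qed.
End PolyF.

Lemma cmul_aux (T : comNzRingType) (u a b c d : T) : u * u = -1 ->
  (a + u * b) * (c + u * d) = (a * c - b * d) + u * (b * c + a * d).
Proof.
move=> hu.
transitivity (a * c + (u * u) * (b * d) + u * (b * c + a * d)); first by ring.
by rewrite hu; ring.
Qed.

Section Zeta.
Variable R : realType.
Variable n : nat.
Hypothesis hn : (0 < n)%N.
Local Notation C := R[i].
Local Notation z := (zeta R n).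
Local Notation th := (2 * pi / n%:R : R).

Lemma zeta_pow k : z ^+ k =
  (cos (k%:R * th))%:C + 'i%C * (sin (k%:R * th))%:C.
Proof.
elim: k => [|k IH].
  by rewrite expr0 mul0r cos0 sin0 rmorph1 rmorph0 mulr0 addr0.
have hk : (k.+1%:R : R) * th = k%:R * th + th by rewrite -(addn1 k) natrD mulrDl mul1r.
rewrite exprSr IH hk cosD sinD.
rewrite /zeta cmul_aux; last by rewrite -expr2 sqr_i.
by congr (_ + _ * _); rewrite ?rmorphB ?rmorphD ?rmorphM.
Qed.


Lemma zeta_n : z ^+ n = 1.
Proof.
rewrite zeta_pow mulrC divfK ?pnatr_eq0 -?lt0n // mulr_natl cos2pi sin2pi.
by rewrite rmorph1 rmorph0 mulr0 addr0.
Qed.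

Lemma cos_lt1_0pi (t : R) : 0 < t <= pi -> cos t < 1.
Proof.
move=> /andP[h0 hp].
have := @ltr_cos R 0 t; rewrite !in_itv /= lexx pi_ge0 hp (ltW h0) /= => /(_ isT isT).
by rewrite cos0 h0.
Qed.

Lemma cos_lt1 (t : R) : 0 < t < pi *+ 2 -> cos t < 1.
Proof.
move=> /andP[h0 h2].
have [hp|hp] := lerP t pi; first by apply: cos_lt1_0pi; rewrite h0 hp.
rewrite -[t in cos t](subrK (pi *+ 2)) cosD2pi -cosN opprB.
apply: cos_lt1_0pi; apply/andP; split.
  by rewrite subr_gt0.
by rewrite lerBlDr mulr2n lerD2l ltW.
Qed.

Lemma zeta_neq1 j : (0 < j < n)%N -> z ^+ j != 1.
Proof.
move=> /andP[hj0 hjn]; apply/eqP; rewrite zeta_pow => E.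
have := congr1 (@complex.Re R) E; rewrite /= mul0r mul1r subr0 addr0 => hc.
have hth : 0 < th by rewrite divr_gt0 ?mulr_gt0 ?pi_gt0 ?ltr0n.
have hnth : n%:R * th = pi *+ 2.
  by rewrite mulrC divfK ?pnatr_eq0 -?lt0n // mulr_natl.
have : cos (j%:R * th) < 1.
  apply: cos_lt1; rewrite mulr_gt0 ?ltr0n //= -hnth.
  by rewrite ltr_pM2r // ltr_nat.
by rewrite hc ltxx.
Qed.

Lemma zeta_prim : n.-primitive_root z.
Proof.
apply/andP; split=> //; apply/forallP => i; apply/eqP.
rewrite unity_rootE.
have [hi|hi] := eqVneq i.+1 n.
  by rewrite hi zeta_n eqxx.
apply/negbTE/zeta_neq1; rewrite ltn0Sn /= ltn_neqAle hi /=.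
exact: ltn_ord.
Qed.

Definition cs : seq C := [seq 1 - z ^+ j | j <- iota 1 (n - 1)].

Lemma prodX_cs : 'X * \prod_(c <- cs) ('X + c%:P) = ('X + 1) ^+ n - 1.
Proof.
have := factor_Xn_sub_1 zeta_prim.
move/(congr1 (comp_poly ('X + 1))).
rewrite rmorph_prod rmorphB rmorph1 rmorphXn /= comp_polyX => <-.
rewrite big_ltn // /cs big_map /index_iota subn1.
congr (_ * _).
  by rewrite comp_polyB comp_polyX comp_polyC expr0 polyC1 addrK.
apply: eq_bigr => i _.
by rewrite comp_polyB comp_polyX comp_polyC rmorphB rmorph1 addrA.
Qed.

Lemma coef_cs k : (\prod_(c <- cs) ('X + c%:P))`_k = ('C(n, k.+1))%:R.
Proof.
have := congr1 (fun p : {poly C} => p`_k.+1) prodX_cs.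
by rewrite /= coefXM /= coefB coef_XaddC_exp coef1 subr0.
Qed.

Lemma cs_nz : all (fun c => c != 0) cs.
Proof.
apply/allP => c /mapP[j]; rewrite mem_iota => /andP[h1 h2] ->.
rewrite subr_eq0 eq_sym zeta_neq1 // h1 /=.
by move: h2; rewrite subnKC.
Qed.

Lemma xsfromE : xsfrom R n 1 = [seq c^-1 | c <- cs].
Proof. by rewrite /xsfrom /cs -map_comp subn1. Qed.

Lemma el0 (T : comNzRingType) (xs : seq T) : el 0 xs = 1.
Proof. by elim: xs => [|x xs IH] //=; rewrite add0r. Qed.

Lemma prod_cs : \prod_(c <- cs) c = n%:R.
Proof.
have := coef_cs 0; rewrite coef_prod_XaddC ?cs_nz // el0 mulr1 bin1 => ->.
by [].
Qed.

Lemma el_x k : el k (xsfrom R n 1) = ('C(n, k.+1))%:R / n%:R.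
Proof.
have := coef_cs k; rewrite coef_prod_XaddC ?cs_nz // prod_cs -xsfromE => <-.
by rewrite [n%:R * _]mulrC mulfK // pnatr_eq0 -lt0n.
Qed.

Lemma size_x : size (xsfrom R n 1) = (n - 1)%N.
Proof. by rewrite size_map size_iota. Qed.
End Zeta.

End PC.
Import PC.
Module PD.
Set Implicit Arguments. Unset Strict Implicit. Unset Printing Implicit Defensive.
Import Order.TTheory GRing.Theory Num.Theory.
Local Open Scope ring_scope.

Lemma trinom l c p :
  ('C(l + p, l) * 'C(l + c + p, c) = 'C(l + c + p, l + c) * 'C(l + c, l))%N.
Proof.
have h1 := bin_fact (leq_addr p l).
have h2 := bin_fact (leq_trans (leq_addl l c) (leq_addr p (l + c))).
have h3 := bin_fact (leq_addr p (l + c)).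
have h4 := bin_fact (leq_addr c l).
rewrite addKn in h1; rewrite addKn in h3; rewrite addKn in h4.
have e : (l + c + p - c = l + p)%N by lia.
rewrite e in h2.
apply/eqP; rewrite -(@eqn_pmul2r (l`! * c`! * p`!)); last by rewrite !muln_gt0 !fact_gt0.
apply/eqP.
transitivity ('C(l + c + p, c) * (c`! * ('C(l + p, l) * (l`! * p`!))))%N; first by ring.
rewrite h1 h2.
transitivity ('C(l + c + p, l + c) * (('C(l + c, l) * (l`! * c`!)) * p`!))%N; last by ring.
by rewrite h4 h3.
Qed.

Lemma binZ_nat (R : realType) p q : binZ R p%:Z q%:Z = ('C(p, q))%:R.
Proof. by []. Qed.

Lemma binZ_neg (R : realType) x y : (y < 0)%R -> binZ R x y = 0.
Proof.
move=> hy; rewrite /binZ; case: ifP => // /andP[_ h].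
by rewrite ltNge h in hy.
Qed.

Lemma part1 (R : realType) (n m l : nat) :
  (l <= m)%N -> (m <= n - 1)%N -> (0 < n)%N ->
  \sum_(0 <= j < n - m - 1)
      binZ R (n%:Z - m%:Z + l%:Z - 3 - 2 * j%:Z) (l%:Z - 1 - j%:Z) *
      Y21 R n (m%:Z - l%:Z + 1 + j%:Z) (n%:Z - m%:Z + l%:Z - 3 - 2 * j%:Z)
   = (n * (m + 1))%:R^-1 * ('C(n - 1, m))%:R * (('C(n, l))%:R - ('C(m + 1, l))%:R).
Proof.
move=> hlm hmn hn.
have hmn' : (m < n)%N by lia.
set xs := xsfrom R n 1.
set L := (n - l - 1)%N.
have Hterm : forall j, (0 <= j < n - m - 1)%N ->
    binZ R (n%:Z - m%:Z + l%:Z - 3 - 2 * j%:Z) (l%:Z - 1 - j%:Z) *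
      Y21 R n (m%:Z - l%:Z + 1 + j%:Z) (n%:Z - m%:Z + l%:Z - 3 - 2 * j%:Z)
    = Bw m L (j + (m - l + 1)) xs.
  move=> j /andP[_ hj].
  have [hjl|hjl] := ltnP j l.
  - have e1 : (n%:Z - m%:Z + l%:Z - 3 - 2 * j%:Z) = ((l - 1 - j) + (n - m - 2 - j))%N%:Z by lia.
    have e2 : (l%:Z - 1 - j%:Z) = (l - 1 - j)%N%:Z by lia.
    have e3 : (m%:Z - l%:Z + 1 + j%:Z) = (j + (m - l + 1))%N%:Z by lia.
    rewrite e1 e2 e3 binZ_nat Y21E // /Bw ifT; last by apply/andP; split; lia.
    have -> : (m - (j + (m - l + 1)) = l - 1 - j)%N by lia.
    have -> : (L - (j + (m - l + 1)) = n - m - 2 - j)%N by lia.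
    by [].
  - rewrite binZ_neg ?mul0r; last by lia.
    rewrite Bw0 //; apply/negP => /andP[h _]; lia.
rewrite (eq_big_nat _ _ Hterm).
have e : (n - m - 1 = (n - l) - (m - l + 1))%N by lia.
rewrite e -(big_addn 0 (n - l) (m - l + 1) xpredT (fun a => Bw m L a xs)) add0n.
have Htot := @el_mul _ xs n m L hmn'.
rewrite (big_cat_nat _ (n := (m - l)%N)) //= in Htot; last by lia.
rewrite (big_ltn (m := (m - l)%N)) /= in Htot; last by lia.
rewrite (big_cat_nat _ (n := (n - l)%N) (m := (m - l).+1) (p := n)) //= in Htot; try lia.
rewrite big1_seq in Htot; last first.
  move=> a; rewrite mem_index_iota => /andP[_ ha].
  rewrite /Bw; case: ifP => // /andP[h1 h2]; rewrite EE_big ?mulr0 // size_x; rewrite /L in h2 *; lia.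
have S3 : \sum_(n - l <= i < n) Bw m L i xs = 0.
  apply: big1_seq => a; rewrite mem_index_iota => /andP[_ /andP[ha _]].
  rewrite Bw0 //; apply/negP => /andP[_ h]; rewrite /L in h; lia.
rewrite S3 add0r addr0 in Htot.
have HB : Bw m L (m - l) xs = ('C(l + (n - 1 - m), l))%:R * ((n%:R)^-1 * el (m - l) xs).
  rewrite /Bw ifT; last by apply/andP; split; rewrite /L; lia.
  have -> : (m - (m - l) = l)%N by lia.
  have -> : (L - (m - l) = n - 1 - m)%N by rewrite /L; lia.
  have -> : (l + (n - 1 - m) = size xs - (m - l))%N by rewrite size_x; lia.
  rewrite EE_full; last by rewrite size_x; lia.
  rewrite -[\prod_(x <- xs) x]el_full size_x el_x // subn1 prednK // binn mul1r.
  by [].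
have -> : (m - l + 1 = (m - l).+1)%N by rewrite addn1.
have -> : \sum_((m - l).+1 <= i < n - l) Bw m L i xs = el m xs * el L xs - Bw m L (m - l) xs.
  by rewrite Htot addrC addrK.
rewrite HB !el_x //.
have -> : L.+1 = (n - l)%N by rewrite /L; lia.
rewrite bin_sub; last by lia.
have T2 : ('C(l + (n - 1 - m), l) * 'C(n, (m - l).+1) = 'C(n, m.+1) * 'C(m + 1, l))%N.
  have := trinom l (m.+1 - l) (n - 1 - m).
  have -> : (l + (m.+1 - l) + (n - 1 - m) = n)%N by lia.
  have -> : (m.+1 - l = (m - l).+1)%N by lia.
  have -> : (l + (m - l).+1 = m + 1)%N by lia.
  by rewrite addn1.
have hn0 : (n%:R : R[i]) != 0 by rewrite pnatr_eq0 -lt0n.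
have hm0 : ((m + 1)%:R : R[i]) != 0 by rewrite pnatr_eq0 addn1.
have hE : ('C(n - 1, m))%:R = (m + 1)%:R * ('C(n, m.+1))%:R / n%:R :> R[i].
  have := congr1 (fun k => k%:R : R[i]) (mul_bin_diag n m).
  rewrite /= !natrM -subn1 => h.
  apply: (mulfI hn0); rewrite h addn1; field; exact: hn0.
transitivity (('C(n, m.+1))%:R * ('C(n, l))%:R / (n%:R * n%:R)
   - (('C(l + (n - 1 - m), l) * 'C(n, (m - l).+1))%N)%:R / (n%:R * n%:R) : R[i]).
  by rewrite natrM; field.
rewrite T2 natrM hE natrM.
by field; rewrite hn0 natr1 pnatr_eq0.
Qed.


Lemma part2 (R : realType) (n m l : nat) :
  (l <= m)%N -> (m <= n - 1)%N -> (0 < n)%N ->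
  (l = 1%N ->
   Y21 R n m%:Z (n%:Z - m%:Z - 2)
   = (n%:Z - m%:Z - 1)%:~R / (n * (m + 1))%:R * ('C(n - 1, m))%:R).
Proof.
move=> hlm hmn hn hl; subst l.
have P := part1 R hlm hmn hn.
have hmn' : (m + 1 <= n)%N by lia.
have hR : (n%:Z - m%:Z - 1)%:~R = (n - (m + 1))%N%:R :> R[i].
  by rewrite (_ : n%:Z - m%:Z - 1 = (n - (m + 1))%N%:Z) //; lia.
rewrite hR.
have -> : (n - (m + 1))%N%:R / (n * (m + 1))%:R * ('C(n - 1, m))%:R
   = (n * (m + 1))%:R^-1 * ('C(n - 1, m))%:R * (('C(n, 1))%:R - ('C(m + 1, 1))%:R) :> R[i].
  by rewrite !bin1 natrB //; ring.
rewrite -P.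
have [he|hlt] := eqVneq (n - m - 1)%N 0%N.
  rewrite he big_geq // /Y21 ifF //; apply/negbTE; rewrite negb_and; apply/orP; right.
  rewrite -ltNge; lia.
rewrite big_ltn; last by rewrite lt0n.
rewrite big1_seq ?addr0; last first.
  move=> j; rewrite mem_index_iota => /andP[_ /andP[hj _]].
  by rewrite binZ_neg ?mul0r //; lia.
have -> : n%:Z - m%:Z + 1%:Z - 3 = (n - m - 2)%N%:Z by lia.
have -> : (1%:Z - 1 : int) = 0%N%:Z by [].
have -> : m%:Z - 1%:Z + 1 = m%:Z by lia.
have -> : n%:Z - m%:Z - 2 = (n - m - 2)%N%:Z by lia.
by rewrite binZ_nat bin0 mul1r.
Qed.

End PD.
Import PD.

Theorem theorem2 (R : realType) (n m l : nat) :
  (l <= m)%N -> (m <= n - 1)%N -> (0 < n)%N ->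
  (\sum_(0 <= j < n - m - 1)
      binZ R (n%:Z - m%:Z + l%:Z - 3 - 2 * j%:Z) (l%:Z - 1 - j%:Z) *
      Y21 R n (m%:Z - l%:Z + 1 + j%:Z) (n%:Z - m%:Z + l%:Z - 3 - 2 * j%:Z)
   = (n * (m + 1))%:R^-1 * ('C(n - 1, m))%:R * (('C(n, l))%:R - ('C(m + 1, l))%:R))
  /\
  (l = 1%N ->
   Y21 R n m%:Z (n%:Z - m%:Z - 2)
   = (n%:Z - m%:Z - 1)%:~R / (n * (m + 1))%:R * ('C(n - 1, m))%:R).
Proof.
move=> hlm hmn hn; split; first exact: part1.
exact: part2.
Qed.
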